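(* Let $\phi:\mathbb{R}\to\mathbb{R}$ be a differentiable elementwise nonlinearity with $\frac{\phi(z)}{\phi'(z)}<\infty$ for all $z\in\mathbb{R}$. Let $f(z)=W_1\phi(W_2 z)$ with $W_1\in\mathbb{R}^{k_0\times k}$, $W_2\in\mathbb{R}^{k\times k_0}$, and let $x\in\mathbb{R}^{k_0}$ with $\|x\|_2=1$. Initialize $W_1^{(0)}=x{u^{(0)}}^T$, $W_2^{(0)}=v^{(0)}x^T$ with $u^{(0)},v^{(0)}\in\mathbb{R}^k$ each having all entries equal, and train by gradient descent with learning rate $\gamma\to0$ on $\mathcal{L}(x,f)=\frac12\|x-f(x)\|_2^2$, yielding $W_1^{(\infty)}=xu^T$, $W_2^{(\infty)}=vx^T$ with $u_i=u_j$, $v_i=v_j$ for all $i,j$, $u_i\phi(v_i)=1/k$ and $\frac{u_i^2-{u_i^{(0)}}^2}{2}=\int_{v_i^{(0)}}^{v_i}\frac{\phi(z)}{\phi'(z)}dz$. Then for the trained network $f(z)=W_1^{(\infty)}\phi(W_2^{(\infty)}z)$, $$\lambda_1(\mathbf{J}(f(x)))=\frac{\phi'(v_i)v_i}{\phi(v_i)}$$ (for any $i\in[k]$).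
   Context: $\phi$ is applied coordinatewise. $\mathbf{J}(f(x))$ denotes the Jacobian matrix of $f$ evaluated at $x$, and $\lambda_1$ denotes its top eigenvalue (eigenvalue of largest absolute value). Gradient descent with learning rate $\gamma$ updates each weight matrix by $W\leftarrow W-\gamma\nabla_W\mathcal{L}$; the superscript $(\infty)$ denotes the weights at the end of training in the limit $\gamma\to0$ (gradient flow). *)

(* Defs.v *)
From HB Require Import structures.
From mathcomp Require Import all_boot all_order all_algebra.
From mathcomp Require Import all_classical all_reals all_analysis.
Set Implicit Arguments. Unset Strict Implicit. Unset Printing Implicit Defensive.
Import Order.TTheory GRing.Theory Num.Theory.
Import numFieldNormedType.Exports.
Local Open Scope classical_set_scope.
Local Open Scope ring_scope.

Definition net (R : realType) (k0 k : nat) (phi : R -> R)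
  (W1 : 'M[R]_(k0, k)) (W2 : 'M[R]_(k, k0)) (z : 'cV[R]_k0) : 'cV[R]_k0 :=
  W1 *m map_mx phi (W2 *m z).

Definition jac_matrix (R : realType) (n : nat) (F : 'cV[R]_n -> 'cV[R]_n)
  (x : 'cV[R]_n) : 'M[R]_n :=
  \matrix_(i, j) derive1 (fun t : R => F (x + t *: delta_mx j 0) i 0) 0.

(* (a + i b) is a (complex) eigenvalue of the real matrix A: there is a
   nonzero complex vector p + i q with A (p + i q) = (a + i b)(p + i q),
   written out in real and imaginary parts. *)
Definition complex_eigenvalue (R : realType) (n : nat) (A : 'M[R]_n) (a b : R) :=
  exists p q : 'cV[R]_n, (p != 0 \/ q != 0) /\
    A *m p = a *: p - b *: q /\ A *m q = b *: p + a *: q.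

Definition top_eigenvalue (R : realType) (n : nat) (A : 'M[R]_n) (l : R) :=
  complex_eigenvalue A l 0 /\
  forall a b : R, complex_eigenvalue A a b -> a ^+ 2 + b ^+ 2 <= l ^+ 2.

Definition oint (R : realType) (a b : R) (g : R -> R) : R :=
  if a <= b then Rintegral lebesgue_measure `[a, b] g
  else - Rintegral lebesgue_measure `[b, a] g.

(* Main.v *)
Require Import Defs.
From HB Require Import structures.
From mathcomp Require Import all_boot all_order all_algebra.
From mathcomp Require Import all_classical all_reals all_analysis.
Import Order.TTheory GRing.Theory Num.Theory.
Import numFieldNormedType.Exports.
Local Open Scope ring_scope.
From mathcomp Require Import ring lra.

Lemma aff_derivable (R : realType) (b d t : R) : derivable (fun s : R => b + d * s) t 1.
Proof.
apply: derivableD; first exact: derivable_cst.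
by apply: derivableM; [exact: derivable_cst| exact: derivable_id].
Qed.

Lemma aff_derive (R : realType) (b d t : R) : derive1 (fun s : R => b + d * s) t = d.
Proof.
rewrite derive1E deriveD; last 2 first.
  exact: derivable_cst.
  by apply: derivableM; [exact: derivable_cst| exact: derivable_id].
rewrite derive_cst add0r deriveMl; last exact: derivable_id.
by rewrite derive_id mulr1.
Qed.

Lemma key_derive (R : realType) (phi : R -> R) (c b d : R)
  (phi_diff : forall z : R, derivable phi z 1) :
  derive1 (fun t : R => c * phi (b + d * t)) 0 = c * (d * derive1 phi b).
Proof.
have -> : (fun t : R => c * phi (b + d * t)) = (fun t => c * (phi \o (fun s => b + d * s)) t) by [].
rewrite derive1Ml; last first.
  apply/derivable1_diffP; apply: differentiable_comp.
    exact/derivable1_diffP/aff_derivable.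
  exact/derivable1_diffP.
rewrite derive1_comp; [|exact: aff_derivable|exact: phi_diff].
rewrite aff_derive mulr0 addr0; ring.
Qed.

Lemma netE (R : realType) (k0 k : nat) (phi : R -> R) (x z : 'cV[R]_k0) (u v : 'cV[R]_k) r :
  net phi (x *m u^T) (v *m x^T) z r 0 =
  x r 0 * \sum_l u l 0 * phi (v l 0 * \sum_j x j 0 * z j 0).
Proof.
rewrite /net !mxE big_distrr /=; apply: eq_bigr => l _.
rewrite !mxE big_ord1 !mxE mulrA; congr (_ * phi _).
rewrite big_distrr /=; apply: eq_bigr => j _.
by rewrite !mxE big_ord1 !mxE mulrA.
Qed.

Lemma sum_shift (R : realType) (k0 : nat) (x : 'cV[R]_k0) (t : R) j
  (x_unit : \sum_(j < k0) x j 0 ^+ 2 = 1) :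
  \sum_m x m 0 * (x + t *: delta_mx j 0) m 0 = 1 + t * x j 0.
Proof.
under eq_bigr do rewrite !mxE mulrDr.
rewrite big_split /=; congr (_ + _).
  by rewrite -x_unit; apply: eq_bigr => m _; rewrite expr2.
rewrite (bigD1 j) //= big1 ?addr0; first by rewrite eqxx mulr1 mulrC.
by move=> m /negbTE ->; rewrite /= mulr0 mulr0.
Qed.

Lemma top_rank1 (R : realType) (n : nat) (x : 'cV[R]_n) (lam : R)
  (x_unit : \sum_(j < n) x j 0 ^+ 2 = 1) :
  top_eigenvalue (lam *: (x *m x^T)) lam.
Proof.
have xx : x^T *m x = 1%:M.
  apply/matrixP => i j; rewrite !ord1 !mxE -x_unit /=.
  by apply: eq_bigr => m _; rewrite !mxE expr2.
have Ap : forall p : 'cV[R]_n, lam *: (x *m x^T) *m p = (lam * (x^T *m p) 0 0) *: x.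
  move=> p; rewrite -scalemxAl -mulmxA [x^T *m p]mx11_scalar mul_mx_scalar.
  by apply/matrixP => i j; rewrite !ord1 !mxE eqxx /= mulr1n mulrA.
have xA : forall p : 'cV[R]_n, (x^T *m (lam *: (x *m x^T) *m p)) 0 0 = lam * (x^T *m p) 0 0.
  move=> p; rewrite Ap -scalemxAr xx !mxE eqxx /=; ring.
split.
  exists x, 0; split.
    left; apply/eqP => x0; move: x_unit; rewrite x0.
    under eq_bigr do rewrite mxE expr0n /=.
    by rewrite big1 // => /eqP; rewrite eq_sym oner_eq0.
  rewrite !scale0r !scaler0 subr0 add0r mulmx0 Ap xx mxE eqxx mulr1n mulr1; split => //.
move=> a b [p [q [pq [E1 E2]]]].
set al := (x^T *m p) 0 0; set be := (x^T *m q) 0 0.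
have F1 : lam * al = a * al - b * be.
  by rewrite -xA E1 mulmxBr -!scalemxAr !mxE /al /be !mxE.
have F2 : lam * be = b * al + a * be.
  by rewrite -xA E2 mulmxDr -!scalemxAr !mxE /al /be !mxE.
have [/eqP s0|s0] := boolP (al ^+ 2 + be ^+ 2 == 0).
  have al0 : al = 0 by nra.
  have be0 : be = 0 by nra.
  have G1 : a *: p = b *: q by apply/eqP; rewrite -subr_eq0 -E1 Ap -/al al0 mulr0 scale0r.
  have G2 : b *: p = - (a *: q) by apply/eqP; rewrite -addr_eq0 -E2 Ap -/be be0 mulr0 scale0r.
  have [/eqP ab0|ab0] := boolP (a ^+ 2 + b ^+ 2 == 0); first by rewrite ab0 sqr_ge0.
  have E : forall r : 'I_n, p r 0 = 0 /\ q r 0 = 0.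
    move=> r.
    have H1 := congr1 (fun M : 'cV[R]_n => M r 0) G1.
    have H2 := congr1 (fun M : 'cV[R]_n => M r 0) G2.
    move: H1 H2; rewrite /= !mxE => H1 H2.
    split; apply: (mulfI ab0); rewrite mulr0.
      have -> : (a ^+ 2 + b ^+ 2) * p r 0 = a * (a * p r 0) + b * (b * p r 0) by ring.
      by rewrite H1 H2; ring.
    have H3 : a * q r 0 = - (b * p r 0) by rewrite H2 opprK.
    have -> : (a ^+ 2 + b ^+ 2) * q r 0 = a * (a * q r 0) + b * (b * q r 0) by ring.
    by rewrite H3 -H1; ring.
  exfalso; case: pq => /negP; apply; apply/eqP/matrixP => r c;
    rewrite ord1 mxE; have [] := E r; done.
have la : lam = a.
  have : (lam - a) * (al ^+ 2 + be ^+ 2) = 0.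
    have -> : (lam - a) * (al ^+ 2 + be ^+ 2) = al * (lam * al - a * al) + be * (lam * be - a * be) by ring.
    by rewrite F1 F2; ring.
  by move/eqP; rewrite mulf_eq0 (negbTE s0) orbF subr_eq0 => /eqP.
have b0 : b = 0.
  have : b * (al ^+ 2 + be ^+ 2) = 0.
    have -> : b * (al ^+ 2 + be ^+ 2) = al * ((b * al + a * be) - a * be) + be * (a * al - (a * al - b * be)) by ring.
    by rewrite -F2 -F1; ring.
  by move/eqP; rewrite mulf_eq0 (negbTE s0) orbF => /eqP.
by rewrite la b0 expr0n /= addr0.
Qed.

Theorem theorem2 (R : realType) (k0 k : nat) (phi : R -> R)
  (phi_diff : forall z : R, derivable phi z 1)
  (phi_ratio : forall z : R, (derive1 phi) z != 0)
  (x : 'cV[R]_k0) (x_unit : \sum_(j < k0) x j 0 ^+ 2 = 1)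
  (u0 v0 u v : 'cV[R]_k)
  (u0_const : forall i j : 'I_k, u0 i 0 = u0 j 0)
  (v0_const : forall i j : 'I_k, v0 i 0 = v0 j 0)
  (u_const : forall i j : 'I_k, u i 0 = u j 0)
  (v_const : forall i j : 'I_k, v i 0 = v j 0)
  (balance : forall i : 'I_k, u i 0 * phi (v i 0) = k%:R^-1)
  (conserved : forall i : 'I_k,
     (u i 0 ^+ 2 - u0 i 0 ^+ 2) / 2 =
     oint (v0 i 0) (v i 0) (fun z => phi z / (derive1 phi) z)) :
  forall i : 'I_k,
    top_eigenvalue
      (jac_matrix (net phi (x *m u^T) (v *m x^T)) x)
      ((derive1 phi) (v i 0) * v i 0 / phi (v i 0)).
Proof.
move=> i.
set a := u i 0; set b := v i 0.
have ua : forall l, u l 0 = a by move=> l; apply: u_const.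
have vb : forall l, v l 0 = b by move=> l; apply: v_const.
have kpos : (0 < k)%N := leq_ltn_trans (leq0n i) (ltn_ord i).
have kn0 : (k%:R : R) != 0 by rewrite pnatr_eq0 -lt0n.
have phib : phi b != 0.
  apply/eqP => pb; move: (balance i); rewrite -/a -/b pb mulr0 => /esym/eqP.
  by rewrite invr_eq0 (negbTE kn0).
have ha : a = k%:R^-1 / phi b by rewrite -(balance i) mulfK.
have J : jac_matrix (net phi (x *m u^T) (v *m x^T)) x =
         ((derive1 phi) b * b / phi b) *: (x *m x^T).
  apply/matrixP => r j; rewrite !mxE big_ord1 !mxE.
  have -> : (fun t : R => net phi (x *m u^T) (v *m x^T) (x + t *: delta_mx j 0) r 0)
     = (fun t => (x r 0 * (k%:R * a)) * phi (b + (b * x j 0) * t)).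
    apply/funext => t; rewrite netE sum_shift //.
    under eq_bigr do rewrite ua vb.
    rewrite sumr_const card_ord -mulr_natl.
    have -> : b * (1 + t * x j 0) = b + b * x j 0 * t by ring.
    ring.
  rewrite key_derive // ha; field.
  by rewrite phib kn0.
rewrite J; exact: top_rank1.
Qed.
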